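(* Let $\mathfrak N=\{1,\dots,p\}$ and let $\phi:2^{\mathfrak N}\to\{0,1\}$ be a simple game, i.e. $\phi(\mathfrak N)=1$, $\phi(\emptyset)=0$, and $T\subset S$, $\phi(S)=0$ imply $\phi(T)=0$; let $\mathcal W=\{C\subset\mathfrak N:\phi(C)=1\}$ and define the aggregation function $\delta:\{0,1\}^p\to\{0,1\}$ by $$\delta(x_1,\dots,x_p)=\sum_{C\in\mathcal W}\prod_{k\in C}x_k\prod_{k\notin C}(1-x_k).$$ Let $\Delta$ be the associated set function on events, defined by $\mathbb I_{\Delta(A_1,\dots,A_p)}=\delta(\mathbb I_{A_1},\dots,\mathbb I_{A_p})$. Let $(X_1,\Pi_1)$ be a random element with values in $\mathbb E\times[0,1]^p$ (with $\mathbb E\subset\mathbb R^m$ equipped with its Borel $\sigma$-field $\mathcal B$), defined on a probability space with probability measure $\mathbf P_{x,\pi}$ and expectation $\mathbf E_{x,\pi}$ (the law of the process started from the state $(x,\pi)$); write $\Pi_1^i$ for the $i$-th coordinate of $\Pi_1$. Fix a player $i\in\mathfrak N$ and a real function $g_i$ on $\mathbb E\times[0,1]^p$ such that $g_i(X_1,\Pi_1)$ is integrable. For each $j\neq i$ fix a Borel set $C^j$ and let $D_1^j=\{(X_1,\Pi_1)\in C^j\}$. For an event $A$ put ${}^iD_1(A)=\Delta(D_1^1,\dots,D_1^{i-1},A,D_1^{i+1},\dots,D_1^p)$, and for a Borel set $C^i$ put $D_1^i=\{(X_1,\Pi_1)\in C^i\}$ and $$\psi(C^i)=\mathbf E_{x,\pi}\Big[(1-\Pi_1^i)\,\mathbb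 I_{{}^iD_1(D_1^i)}+g_i(X_1,\Pi_1)\,\mathbb I_{\overline{{}^iD_1(D_1^i)}}\Big].$$ Then the set ${}^{*}C^i=\{(x,\pi):1-\pi_i-g_i(x,\pi)\le 0\}$ satisfies $\psi({}^{*}C^i)=\inf_{C^i}\psi(C^i)$, the infimum taken over all Borel sets $C^i$, and $$\psi({}^{*}C^i)=\mathbf E_{x,\pi}\big(1-\Pi_1^i-g_i(X_1,\Pi_1)\big)^{+}\mathbb I_{{}^iD_1(\emptyset)}-\mathbf E_{x,\pi}\big(1-\Pi_1^i-g_i(X_1,\Pi_1)\big)^{-}\mathbb I_{{}^iD_1(\Omega)}+\mathbf E_{x,\pi}\,g_i(X_1,\Pi_1).$$
   Context: This arises in a distributed disorder detection model: sensor $i$ observes a Markov process $X_n$ and the posterior process $\Pi_n^i=\mathbf P(\theta_i\le n\mid\mathcal F_n)$ of its disorder time $\theta_i$; each sensor's stopping decision at time $1$ is the event $D_1^j$, and the system stops when the aggregated decision $\delta$ of the sensors' votes equals $1$, i.e. on $\Delta(D_1^1,\dots,D_1^p)$. Here $(y)^+=\max(y,0)$, $(y)^-=\max(-y,0)$, $\overline{A}$ denotes the complement of an event $A$, and $\Omega$ is the whole sample space. *)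

(* Defs.v *)
From HB Require Import structures.
From mathcomp Require Import all_boot all_order all_algebra.
From mathcomp Require Import all_classical all_reals all_analysis.
Set Implicit Arguments. Unset Strict Implicit. Unset Printing Implicit Defensive.
Import Order.TTheory GRing.Theory Num.Theory.
Local Open Scope classical_set_scope.
Local Open Scope ring_scope.

Definition simple_game (p : nat) (phi : {set 'I_p} -> bool) : Prop :=
  [/\ phi [set: 'I_p]%SET, ~~ phi (@finset.set0 _) &
      forall S T : {set 'I_p}, T \subset S -> ~~ phi S -> ~~ phi T].

Definition delta (p : nat) (phi : {set 'I_p} -> bool) (x : 'I_p -> bool) : nat :=
  (\sum_(C : {set 'I_p} | phi C)
     (\prod_(k in C) (x k : nat)) * (\prod_(k in ~: C) (1 - (x k : nat))))%N.

Definition Delta (T : Type) (p : nat) (phi : {set 'I_p} -> bool)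
  (A : 'I_p -> set T) : set T :=
  [set w | delta phi (fun k => `[< A k w >]) == 1%N].

Definition iDelta (T : Type) (p : nat) (phi : {set 'I_p} -> bool)
  (i : 'I_p) (D : 'I_p -> set T) (A : set T) : set T :=
  Delta phi (fun k => if k == i then A else D k).

Definition posp (R : realDomainType) (y : R) : R := Order.max y 0.
Definition negp (R : realDomainType) (y : R) : R := Order.max (- y) 0.

(* Main.v *)
Require Import Defs.
From HB Require Import structures.
From mathcomp Require Import all_boot all_order all_algebra.
From mathcomp Require Import all_classical all_reals all_analysis.
From mathcomp Require Import lra.
Import Order.TTheory GRing.Theory Num.Theory.
Local Open Scope classical_set_scope.
Local Open Scope ring_scope.

Lemma delta_phi p (phi : {set 'I_p} -> bool) (x : 'I_p -> bool) :
  delta phi x = phi [set k | x k]%SET.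
Proof.
rewrite /delta.
have H : forall C : {set 'I_p}, ((\prod_(k in C) (x k : nat)) *
   (\prod_(k in ~: C) (1 - (x k : nat))))%N = (C == [set k | x k]%SET).
  move=> C; case: eqP => [->|/eqP neq].
    rewrite big1 ?mul1n; last by move=> k; rewrite inE => ->.
    by rewrite big1 // => k; rewrite !inE => /negbTE ->.
  have [k Hk] : exists k, (k \in C) != x k.
    apply/existsP; apply: contraR neq => /existsPn Hk; apply/eqP/setP => k.
    by rewrite inE; move: (Hk k); rewrite negbK => /eqP.
  case kC: (k \in C) Hk => /= Hk.
    have xk : x k = false by move: Hk; case: (x k).
    by rewrite (bigD1 k) //= xk.
  have xk : x k = true by move: Hk; case: (x k).
  by rewrite [X in (_ * X)%N](bigD1 k) ?inE ?kC //= xk muln0.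
under eq_bigr do rewrite H.
case Ph: (phi [set k | x k]%SET).
  rewrite (bigD1 [set k | x k]%SET) //= eqxx big1 // => C /andP[_ /negbTE ->] //.
rewrite big1 // => C PC; case: eqP => // E; by move: PC; rewrite E Ph.
Qed.

Lemma Delta_iff T p (phi : {set 'I_p} -> bool) (A : 'I_p -> set T) w :
  Delta phi A w <-> phi [set k | `[< A k w >]]%SET.
Proof. by rewrite /Delta /= delta_phi; case: (phi _). Qed.

Lemma iDelta_dec T p (phi : {set 'I_p} -> bool) (hg : simple_game phi) i
  (D : 'I_p -> set T) (A : set T) :
  iDelta phi i D A = iDelta phi i D set0 `|` (A `&` iDelta phi i D setT).
Proof.
case: hg => _ _ mono.
rewrite /iDelta; apply/funext => w; apply/propext.
set SA := [set k | `[< (if k == i then A else D k) w >]]%SET.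
set S0 := [set k | `[< (if k == i then set0 else D k) w >]]%SET.
set S1 := [set k | `[< (if k == i then setT else D k) w >]]%SET.
have sub : S0 \subset S1.
  apply/fintype.subsetP => k; rewrite !inE; case: (k == i) => //=; try by move/asboolP.
have mon : phi S0 -> phi S1.
  by move=> h; apply: contraLR h; apply: mono.
have ES : SA = if `[< A w >] then S1 else S0.
  have [Aw|Aw] := pselect (A w).
    rewrite asboolT //; apply/setP => k; rewrite !inE; case: (k == i) => //.
    by rewrite !asboolT.
  rewrite asboolF //; apply/setP => k; rewrite !inE; case: (k == i) => //.
  by rewrite !asboolF.
split.
  move/Delta_iff; rewrite -/SA ES; case: asboolP => Aw h.
    by right; split => //; apply/Delta_iff.
  by left; apply/Delta_iff.
case=> [/Delta_iff h|[Aw /Delta_iff h]]; apply/Delta_iff; rewrite -/SA ES.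
  by case: asboolP => _ //; apply: mon.
by case: asboolP.
Qed.

Lemma Delta_measurable d (T : measurableType d) p (phi : {set 'I_p} -> bool)
  (A : 'I_p -> set T) :
  (forall k, measurable (A k)) -> measurable (Delta phi A).
Proof.
move=> hA.
have -> : Delta phi A = \bigcup_(S in [set S : {set 'I_p} | phi S])
    \bigcap_(k in [set: 'I_p]) (if k \in S then A k else ~` A k).
  apply/seteqP; split => w.
    move/Delta_iff => h; exists [set k | `[< A k w >]]%SET => // k _.
    by rewrite inE; case: asboolP.
  case=> S /= PS HS; apply/Delta_iff.
  suff -> : [set k | `[< A k w >]]%SET = S by [].
  apply/setP => k; rewrite inE; move: (HS k I); case: (k \in S) => /= h.
    exact: asboolT.
  exact: asboolF.
apply: fin_bigcup_measurable; first exact: finite_finset.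
move=> S _; apply: fin_bigcap_measurable; first exact: finite_finset.
by move=> k _; case: (k \in S); [exact: hA | exact/measurableC/hA].
Qed.

Lemma pw_le (R : realType) (c b0 b1 : bool) (hv : R) : (b0 -> b1) ->
  hv * (b0 || (hv <= 0) && b1)%:R <= hv * (b0 || c && b1)%:R.
Proof.
case: b0 b1 c => [] [] [] //= _.
all: case: (leP hv 0) => H; rewrite ?mulr1 ?mulr0; lra.
Qed.

Lemma pospE (R : realType) (y : R) : posp y = if 0 <= y then y else 0.
Proof.
rewrite /posp /Order.max; case: (ltP y 0) => H; case: (leP 0 y) => H' //; lra.
Qed.

Lemma negpE (R : realType) (y : R) : negp y = if 0 <= y then 0 else - y.
Proof.
rewrite /negp /Order.max; case: (ltP (- y) 0) => H; case: (leP 0 y) => H' //; lra.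
Qed.

Lemma pw_eq (R : realType) (b0 b1 : bool) (hv : R) : (b0 -> b1) ->
  hv * (b0 || (hv <= 0) && b1)%:R = posp hv * b0%:R - negp hv * b1%:R.
Proof.
rewrite pospE negpE.
case: b0 b1 => [] [] //= H01; rewrite ?andbF ?andbT ?orbF ?orbT; try by have := H01 isT.
all: case: (leP 0 hv) => H; case: (leP hv 0) => H' /=; rewrite ?mulr1 ?mulr0; lra.
Qed.

Lemma abs_posp (R : realType) (y : R) : `|posp y| <= `|y|.
Proof. by rewrite pospE; case: ifP; rewrite ?normr0. Qed.

Lemma abs_negp (R : realType) (y : R) : `|negp y| <= `|y|.
Proof. by rewrite negpE; case: ifP; rewrite ?normr0 ?normrN. Qed.

Theorem lemma1 (R : realType) (m p : nat) (phi : {set 'I_p} -> bool)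
  (dO : measure_display) (Omega : measurableType dO) (P : probability Omega R)
  (E : set (m.-tuple R))
  (X : Omega -> m.-tuple R) (Pi : Omega -> p.-tuple R)
  (i : 'I_p) (g : (m.-tuple R * p.-tuple R)%type -> R)
  (Cs : 'I_p -> set (m.-tuple R * p.-tuple R)%type) :
  simple_game phi ->
  measurable_fun setT X -> measurable_fun setT Pi ->
  (forall w, E (X w)) ->
  (forall w (k : 'I_p), 0 <= tnth (Pi w) k <= 1) ->
  measurable_fun setT g ->
  P.-integrable setT (fun w => (g (X w, Pi w))%:E) ->
  (forall j, j != i -> measurable (Cs j)) ->
  let Y := fun w => (X w, Pi w) in
  let D := fun j => Y @^-1` Cs j in
  let iD := iDelta phi i D in
  let psi := fun C : set (m.-tuple R * p.-tuple R)%type =>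
    (\int[P]_w ((1 - tnth (Pi w) i) * \1_(iD (Y @^-1` C)) w
                + g (Y w) * \1_(~` iD (Y @^-1` C)) w)%:E)%E in
  let Cstar := [set s : (m.-tuple R * p.-tuple R)%type |
                 1 - tnth s.2 i - g s <= 0] in
  [/\ measurable Cstar,
      psi Cstar = ereal_inf (psi @` measurable) &
      psi Cstar =
        (\int[P]_w (posp (1 - tnth (Pi w) i - g (Y w)) * \1_(iD set0) w)%:E
         - \int[P]_w (negp (1 - tnth (Pi w) i - g (Y w)) * \1_(iD setT) w)%:E
         + \int[P]_w (g (Y w))%:E)%E].
Proof.
move=> hg mX mPi _ hPi mg ig mCs Y D iD psi Cstar.
have mY : measurable_fun setT Y by exact: measurable_fun_pair.
have mpi : measurable_fun setT (fun w => tnth (Pi w) i).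
  exact: (measurableT_comp (measurable_tnth i) mPi).
have mgY : measurable_fun setT (fun w => g (Y w)) by exact: measurableT_comp mg mY.
pose h w := 1 - tnth (Pi w) i - g (Y w).
have mh : measurable_fun setT h.
  apply: measurable_realfun.measurable_funB => //.
  by apply: measurable_realfun.measurable_funB => //.
have mCstar : measurable Cstar.
  have mf : measurable_fun setT
      (fun s : (m.-tuple R * p.-tuple R)%type => 1 - tnth s.2 i - g s <= 0).
    apply: measurable_realfun.measurable_fun_ler => //.
    apply: measurable_realfun.measurable_funB => //.
    apply: measurable_realfun.measurable_funB => //.
    exact: (measurableT_comp (measurable_tnth i) measurable_snd).
  by have := mf measurableT [set true] I; rewrite setTI.
have mpre : forall C, measurable C -> measurable (Y @^-1` C).
  by move=> C mC; have := mY measurableT C mC; rewrite setTI.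
have miD : forall A, measurable A -> measurable (iD A).
  move=> A mA; apply: Delta_measurable => k.
  case: eqP => [_|/eqP Hk]; first exact: mA.
  by apply: mpre; apply: mCs.
have intb : forall f k : Omega -> R, measurable_fun setT f ->
    (forall w, `|f w| <= `|k w|) -> P.-integrable setT (EFin \o k) ->
    P.-integrable setT (EFin \o f).
  move=> f k mf fk ik; apply: le_integrable ik => //; first exact/measurable_realfun.measurable_EFinP.
  by move=> w _ /=; rewrite lee_fin.
have i1 : P.-integrable setT (EFin \o (fun w => 1 - tnth (Pi w) i)).
  apply: (intb _ (cst 1)).
  - by apply: measurable_realfun.measurable_funB.
  - move=> w; have /andP[a b] := hPi w i.
    rewrite normr1 ger0_norm ?subr_ge0 //; lra.
  - exact: finite_measure_integrable_cst.
have ig' : P.-integrable setT (EFin \o (fun w => g (Y w))) by exact: ig.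
have ih : P.-integrable setT (EFin \o h).
  apply: eq_integrable (integrableB measurableT i1 ig') => //.
have indb : forall (B : set Omega) w, `|\1_B w| <= 1 :> R.
  by move=> B w; rewrite indicE; case: (w \in B); rewrite ?normr1 ?normr0.
have ihI : forall B, measurable B ->
    P.-integrable setT (EFin \o (fun w => h w * \1_B w)).
  move=> B mB; apply: (intb _ h) => //.
    by apply: measurable_realfun.measurable_funM => //.
  by move=> w; rewrite normrM; apply: ler_piMr => //.
have integrandE : forall A w,
    (1 - tnth (Pi w) i) * \1_(iD A) w + g (Y w) * \1_(~` iD A) w
    = g (Y w) + h w * \1_(iD A) w.
  move=> A w; rewrite !indicE in_setC /h.
  case: (w \in iD A) => /=; rewrite ?mulr1n ?mulr0n ?mulr1 ?mulr0 ?addr0 ?add0r; lra.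
have psiE : forall C, psi C =
    (\int[P]_w (g (Y w) + h w * \1_(iD (Y @^-1` C)) w)%:E)%E.
  by move=> C; rewrite /psi; apply: eq_integral => w _; rewrite integrandE.
have psi_int : forall A, measurable A -> P.-integrable setT
    (fun w => (g (Y w) + h w * \1_(iD A) w)%:E).
  move=> A mA; apply: eq_integrable (integrableD measurableT ig' (ihI _ (miD _ mA))) => //.
have indE : forall A w, \1_(iD A) w =
    ((w \in iD set0) || (w \in A) && (w \in iD setT))%:R :> R.
  move=> A w; rewrite indicE /iD (@iDelta_dec _ _ _ hg i D A) in_setU in_setI //.
have sub01 : forall w, w \in iD set0 -> w \in iD setT.
  move=> w H; rewrite /iD (@iDelta_dec _ _ _ hg i D setT) in_setU.
  by rewrite /iD in H; rewrite H.
have hA : forall w, (w \in Y @^-1` Cstar) = (h w <= 0).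
  by move=> w; apply/idP/idP => [/set_mem //|H]; apply: mem_set.
split => //.
  apply/eqP; rewrite eq_le; apply/andP; split.
    apply: le_ereal_inf_tmp => _ [C mC <-].
    rewrite !psiE; apply: le_integral.
    - exact: measurableT.
    - exact: psi_int (mpre _ mCstar).
    - exact: psi_int (mpre _ mC).
    move=> w _; rewrite lee_fin lerD2l !indE hA; apply: pw_le; exact: sub01.
  by apply: ereal_inf_lbound; exists Cstar.
have mpos : measurable_fun setT (fun w => posp (h w)).
  exact: (measurable_realfun.measurable_maxr mh (measurable_cst _)).
have mneg : measurable_fun setT (fun w => negp (h w)).
  exact: (measurable_realfun.measurable_maxr (measurable_realfun.measurable_funN mh)
          (measurable_cst _)).
have Ja : P.-integrable setT (EFin \o (fun w => posp (h w) * \1_(iD set0) w)).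
  apply: (intb _ h) => //.
    apply: measurable_realfun.measurable_funM => //.
    by apply: measurable_realfun.measurable_indic; apply: miD.
  by move=> w; rewrite normrM; apply: (le_trans _ (@abs_posp _ (h w))); apply: ler_piMr.
have Jb : P.-integrable setT (EFin \o (fun w => negp (h w) * \1_(iD setT) w)).
  apply: (intb _ h) => //.
    apply: measurable_realfun.measurable_funM => //.
    by apply: measurable_realfun.measurable_indic; apply: miD.
  by move=> w; rewrite normrM; apply: (le_trans _ (@abs_negp _ (h w))); apply: ler_piMr.
have J : P.-integrable setT (EFin \o (fun w =>
    posp (h w) * \1_(iD set0) w - negp (h w) * \1_(iD setT) w)).
  by apply: eq_integrable (integrableB measurableT Ja Jb).
have E1 : (\int[P]_w (g (Y w) +
      (posp (h w) * \1_(iD set0) w - negp (h w) * \1_(iD setT) w))%:E =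
    \int[P]_w (g (Y w))%:E +
    \int[P]_w (posp (h w) * \1_(iD set0) w - negp (h w) * \1_(iD setT) w)%:E)%E.
  exact: (integralD_EFin measurableT ig' J).
have E2 : (\int[P]_w (posp (h w) * \1_(iD set0) w - negp (h w) * \1_(iD setT) w)%:E =
    \int[P]_w (posp (h w) * \1_(iD set0) w)%:E -
    \int[P]_w (negp (h w) * \1_(iD setT) w)%:E)%E.
  exact: (integralB_EFin measurableT Ja Jb).
rewrite psiE -[RHS]addeC -E2 -E1.
apply: eq_integral => w _; congr (_%:E); congr (_ + _).
rewrite indE hA pw_eq; last exact: sub01.
by rewrite !indicE.
Qed.
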